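(* Let $q=1-p=o\!\left(\frac{1}{n^{1.5}}\right)$. Then for all sufficiently large $n\in\mathbb{N}$ we have $u_3(n,p)=u_3'(n,p)=4$.
   Context: $G(n,p)$ is the Erdős–Rényi random graph on $n$ labelled vertices (vertex set $V$), each edge present independently with probability $p=p(n)$; $\mathbb{P}_{n,p}$ is the corresponding probability and $q=1-p$. A diameter graph in $\mathbb{R}^d$ is a graph $(V,E)$ with $V\subset\mathbb{R}^d$ finite and $E=\{\{\mathbf{x},\mathbf{y}\}\subseteq V: |\mathbf{x}-\mathbf{y}|=\operatorname{diam}V\}$, where $\operatorname{diam}V=\max_{\mathbf{x},\mathbf{y}\in V}|\mathbf{x}-\mathbf{y}|$ (Euclidean norm); a graph is a diameter graph in $\mathbb{R}^d$ if it is isomorphic to one. $u_d(n,p)$ is the largest positive integer $k$ such that $\mathbb{P}_{n,p}\big(\exists W\subseteq V,\ |W|=k,\ G[W]$ is a diameter graph in $\mathbb{R}^d$ and $\chi(G[W])=d+1\big)>\frac12$, where $G[W]$ is the induced subgraph; if no such $k$ exists, $u_d(n,p)=0$. $u_d'(n,p)$ is defined identically with the additional requirement that $G[W]$ be connected. *)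

(* Defs.v *)
From Stdlib Require Import Reals ClassicalEpsilon.
From mathcomp Require Import all_boot.
Set Implicit Arguments. Unset Strict Implicit. Unset Printing Implicit Defensive.

Definition eucl_dist (d : nat) (a b : 'I_d -> R) : R :=
  sqrt (\big[Rplus/R0]_(i < d) Rsqr (Rminus (a i) (b i))).

(* A graph on the labelled vertex set 'I_n is encoded by its edge set
   E, a set of pairs (i,j) with i < j (one pair per unordered edge). *)
Definition upairs (n : nat) : {set 'I_n * 'I_n} := [set x : 'I_n * 'I_n | (nat_of_ord x.1 < nat_of_ord x.2)%N].

Definition adj (n : nat) (E : {set 'I_n * 'I_n}) : rel 'I_n :=
  fun x y => ((x, y) \in E) || ((y, x) \in E).

(* P_{n,p}(A) for the Erdos-Renyi random graph G(n,p): sum over all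
   graphs (edge sets E within upairs n) of p^|E| q^(N-|E|) [A E]. *)
Definition prob_np (n : nat) (p : R) (A : {set 'I_n * 'I_n} -> Prop) : R :=
  \big[Rplus/R0]_(E : {set 'I_n * 'I_n} | E \subset upairs n)
     Rmult (Rmult (pow p #|E|) (pow (Rminus 1 p) (#|upairs n| - #|E|)))
           (if excluded_middle_informative (A E) then R1 else R0).

(* The induced subgraph G[W] (adjacency relation e restricted to W)
   is a diameter graph in R^d: it is isomorphic to the diameter graph
   on the point set f(W), i.e. f is injective on W and for distinct
   x,y in W, xy is an edge iff |f x - f y| = diam f(W). *)
Definition is_diameter_graph (d n : nat) (e : rel 'I_n) (W : {set 'I_n}) : Prop :=
  exists f : 'I_n -> ('I_d -> R),
    {in W &, injective f} /\
    exists D : R,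
      (forall x y, x \in W -> y \in W -> Rle (eucl_dist (f x) (f y)) D) /\
      (exists x y, x \in W /\ y \in W /\ eucl_dist (f x) (f y) = D) /\
      (forall x y, x \in W -> y \in W -> x <> y ->
         (e x y <-> eucl_dist (f x) (f y) = D)).

Definition colorable (n : nat) (e : rel 'I_n) (W : {set 'I_n}) (k : nat) : Prop :=
  exists c : 'I_n -> nat,
    (forall x, x \in W -> (c x < k)%N) /\
    (forall x y, x \in W -> y \in W -> e x y -> c x <> c y).

Definition chromatic_number_is (n : nat) (e : rel 'I_n) (W : {set 'I_n}) (k : nat) : Prop :=
  colorable e W k /\ (forall j, colorable e W j -> (k <= j)%N).

Definition induced_connected (n : nat) (e : rel 'I_n) (W : {set 'I_n}) : Prop :=
  forall x y, x \in W -> y \in W ->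
    connect (fun a b => [&& a \in W, b \in W & e a b]) x y.

Definition ud_event (conn : bool) (d n k : nat) (E : {set 'I_n * 'I_n}) : Prop :=
  exists W : {set 'I_n},
    #|W| = k /\ is_diameter_graph d (adj E) W /\
    chromatic_number_is (adj E) W d.+1 /\
    (conn -> induced_connected (adj E) W).

Definition good_k (conn : bool) (d n : nat) (p : R) (k : nat) : bool :=
  (0 < k)%N && (if Rlt_dec (Rinv 2) (@prob_np n p (@ud_event conn d n k)) then true else false).

(* Largest positive k with P > 1/2, or 0 if none. Since the event is
   impossible for k > n (probability 0), it suffices to range over k <= n. *)
Definition u_gen (conn : bool) (d n : nat) (p : R) : nat :=
  \max_(k < n.+1 | good_k conn d n p k) (k : nat).

Definition u_d (d n : nat) (p : R) : nat := u_gen false d n p.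
Definition u'_d (d n : nat) (p : R) : nat := u_gen true d n p.

(* Main.v *)
Require Import Defs.
From Stdlib Require Import Reals ClassicalEpsilon.
From mathcomp Require Import all_boot all_order all_algebra.
From mathcomp Require Import Rstruct zify.
From Stdlib Require Import Lra Psatz FunctionalExtensionality.
Set Implicit Arguments. Unset Strict Implicit. Unset Printing Implicit Defensive.
Import Order.TTheory GRing.Theory Num.Theory.
Open Scope R_scope.
Definition i0 : 'I_3 := @Ordinal 3 0 isT.
Definition i1 : 'I_3 := @Ordinal 3 1 isT.
Definition i2 : 'I_3 := @Ordinal 3 2 isT.

Lemma sum3 (g : 'I_3 -> R) : \big[Rplus/R0]_(i < 3) g i = g i0 + g i1 + g i2.
Proof.
rewrite !big_ord_recl big_ord0 Rplus_0_r -Rplus_assoc.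
by congr (g _ + g _ + g _); apply: val_inj.
Qed.

Lemma ord3_cases (i : 'I_3) : i = i0 \/ i = i1 \/ i = i2.
Proof.
case: i => [[|[|[|k]]] Hk].
- by left; apply: val_inj.
- by right; left; apply: val_inj.
- by right; right; apply: val_inj.
- by [].
Qed.

Definition sq3 (x y : 'I_3 -> R) := (x i0 - y i0)^2 + (x i1 - y i1)^2 + (x i2 - y i2)^2.

Lemma eucl_sq (x y : 'I_3 -> R) : eucl_dist x y = sqrt (sq3 x y).
Proof. rewrite /eucl_dist sum3; unfold Rsqr, sq3; apply: f_equal; ring. Qed.

Lemma sq3_ge0 x y : 0 <= sq3 x y.
Proof. unfold sq3; repeat apply Rplus_le_le_0_compat; apply pow2_ge_0. Qed.

Lemma sq3_pos x y : x <> y -> 0 < sq3 x y.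
Proof.
move=> nxy; case: (Rlt_or_le 0 (sq3 x y)) => // h; exfalso; apply: nxy.
unfold sq3 in h.
have q0 := pow2_ge_0 (x i0 - y i0).
have q1 := pow2_ge_0 (x i1 - y i1).
have q2 := pow2_ge_0 (x i2 - y i2).
have z0 : (x i0 - y i0)^2 = 0 by lra.
have e0 : x i0 = y i0 by clear -z0; nra.
have z1 : (x i1 - y i1)^2 = 0 by lra.
have e1 : x i1 = y i1 by clear -z1; nra.
have z2 : (x i2 - y i2)^2 = 0 by lra.
have e2 : x i2 = y i2 by clear -z2; nra.
apply: functional_extensionality => i.
by case: (ord3_cases i) => [->|[->|->]].
Qed.
Definition det3 a b c d e f g h i := a*(e*i - f*h) - b*(d*i - f*g) + c*(d*h - e*g).
Definition det4 m11 m12 m13 m14 m21 m22 m23 m24 m31 m32 m33 m34 m41 m42 m43 m44 :=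
 m11*det3 m22 m23 m24 m32 m33 m34 m42 m43 m44 - m12*det3 m21 m23 m24 m31 m33 m34 m41 m43 m44
 + m13*det3 m21 m22 m24 m31 m32 m34 m41 m42 m44 - m14*det3 m21 m22 m23 m31 m32 m33 m41 m42 m43.
Definition dot (a1 a2 a3 b1 b2 b3 : R) := a1*b1+a2*b2+a3*b3.
Lemma gram0 u1 u2 u3 v1 v2 v3 x1 x2 x3 y1 y2 y3 :
  det4 (dot u1 u2 u3 u1 u2 u3) (dot u1 u2 u3 v1 v2 v3) (dot u1 u2 u3 x1 x2 x3) (dot u1 u2 u3 y1 y2 y3)
       (dot v1 v2 v3 u1 u2 u3) (dot v1 v2 v3 v1 v2 v3) (dot v1 v2 v3 x1 x2 x3) (dot v1 v2 v3 y1 y2 y3)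
       (dot x1 x2 x3 u1 u2 u3) (dot x1 x2 x3 v1 v2 v3) (dot x1 x2 x3 x1 x2 x3) (dot x1 x2 x3 y1 y2 y3)
       (dot y1 y2 y3 u1 u2 u3) (dot y1 y2 y3 v1 v2 v3) (dot y1 y2 y3 x1 x2 x3) (dot y1 y2 y3 y1 y2 y3) = 0.
Proof. unfold det4, det3, dot. ring. Qed.
Definition sq (a1 a2 a3 b1 b2 b3 : R) := (a1-b1)^2+(a2-b2)^2+(a3-b3)^2.
Lemma geo (c1 c2 c3 d1 d2 d3 e1 e2 e3 a1 a2 a3 b1 b2 b3 S : R) :
 0 < S -> sq c1 c2 c3 d1 d2 d3 = S -> sq c1 c2 c3 e1 e2 e3 = S -> sq d1 d2 d3 e1 e2 e3 = S ->
 sq a1 a2 a3 c1 c2 c3 = S -> sq a1 a2 a3 d1 d2 d3 = S -> sq a1 a2 a3 e1 e2 e3 = S ->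
 sq b1 b2 b3 c1 c2 c3 = S -> sq b1 b2 b3 d1 d2 d3 = S -> sq b1 b2 b3 e1 e2 e3 = S ->
 sq a1 a2 a3 b1 b2 b3 <= S -> 0 < sq a1 a2 a3 b1 b2 b3 -> False.
Proof.
intros HS Hcd Hce Hde Hac Had Hae Hbc Hbd Hbe Hab Hab0.
pose proof (gram0 (d1-c1) (d2-c2) (d3-c3) (e1-c1) (e2-c2) (e3-c3) (a1-c1) (a2-c2) (a3-c3) (b1-c1) (b2-c2) (b3-c3)) as G.
assert (E1 : dot (d1-c1) (d2-c2) (d3-c3) (d1-c1) (d2-c2) (d3-c3) = S) by (rewrite -Hcd; unfold dot, sq; ring).
assert (E2 : dot (d1-c1) (d2-c2) (d3-c3) (e1-c1) (e2-c2) (e3-c3) = S/2) by (replace (S/2) with ((sq c1 c2 c3 d1 d2 d3 + sq c1 c2 c3 e1 e2 e3 - sq d1 d2 d3 e1 e2 e3)/2) by (rewrite Hcd Hce Hde; field); unfold dot, sq; field).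
assert (E3 : dot (d1-c1) (d2-c2) (d3-c3) (a1-c1) (a2-c2) (a3-c3) = S/2) by (replace (S/2) with ((sq c1 c2 c3 d1 d2 d3 + sq a1 a2 a3 c1 c2 c3 - sq a1 a2 a3 d1 d2 d3)/2) by (rewrite Hcd Hac Had; field); unfold dot, sq; field).
assert (E4 : dot (d1-c1) (d2-c2) (d3-c3) (b1-c1) (b2-c2) (b3-c3) = S/2) by (replace (S/2) with ((sq c1 c2 c3 d1 d2 d3 + sq b1 b2 b3 c1 c2 c3 - sq b1 b2 b3 d1 d2 d3)/2) by (rewrite Hcd Hbc Hbd; field); unfold dot, sq; field).
assert (E5 : dot (e1-c1) (e2-c2) (e3-c3) (d1-c1) (d2-c2) (d3-c3) = S/2) by (replace (S/2) with ((sq c1 c2 c3 e1 e2 e3 + sq c1 c2 c3 d1 d2 d3 - sq d1 d2 d3 e1 e2 e3)/2) by (rewrite Hce Hcd Hde; field); unfold dot, sq; field).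
assert (E6 : dot (e1-c1) (e2-c2) (e3-c3) (e1-c1) (e2-c2) (e3-c3) = S) by (rewrite -Hce; unfold dot, sq; ring).
assert (E7 : dot (e1-c1) (e2-c2) (e3-c3) (a1-c1) (a2-c2) (a3-c3) = S/2) by (replace (S/2) with ((sq c1 c2 c3 e1 e2 e3 + sq a1 a2 a3 c1 c2 c3 - sq a1 a2 a3 e1 e2 e3)/2) by (rewrite Hce Hac Hae; field); unfold dot, sq; field).
assert (E8 : dot (e1-c1) (e2-c2) (e3-c3) (b1-c1) (b2-c2) (b3-c3) = S/2) by (replace (S/2) with ((sq c1 c2 c3 e1 e2 e3 + sq b1 b2 b3 c1 c2 c3 - sq b1 b2 b3 e1 e2 e3)/2) by (rewrite Hce Hbc Hbe; field); unfold dot, sq; field).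
assert (E9 : dot (a1-c1) (a2-c2) (a3-c3) (d1-c1) (d2-c2) (d3-c3) = S/2) by (replace (S/2) with ((sq a1 a2 a3 c1 c2 c3 + sq c1 c2 c3 d1 d2 d3 - sq a1 a2 a3 d1 d2 d3)/2) by (rewrite Hac Hcd Had; field); unfold dot, sq; field).
assert (E10 : dot (a1-c1) (a2-c2) (a3-c3) (e1-c1) (e2-c2) (e3-c3) = S/2) by (replace (S/2) with ((sq a1 a2 a3 c1 c2 c3 + sq c1 c2 c3 e1 e2 e3 - sq a1 a2 a3 e1 e2 e3)/2) by (rewrite Hac Hce Hae; field); unfold dot, sq; field).
assert (E11 : dot (a1-c1) (a2-c2) (a3-c3) (a1-c1) (a2-c2) (a3-c3) = S) by (rewrite -Hac; unfold dot, sq; ring).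
assert (E12 : dot (a1-c1) (a2-c2) (a3-c3) (b1-c1) (b2-c2) (b3-c3) = (2*S - sq a1 a2 a3 b1 b2 b3)/2) by (replace (2*S) with (sq a1 a2 a3 c1 c2 c3 + sq b1 b2 b3 c1 c2 c3) by (rewrite Hac Hbc; ring); unfold dot, sq; field).
assert (E13 : dot (b1-c1) (b2-c2) (b3-c3) (d1-c1) (d2-c2) (d3-c3) = S/2) by (replace (S/2) with ((sq b1 b2 b3 c1 c2 c3 + sq c1 c2 c3 d1 d2 d3 - sq b1 b2 b3 d1 d2 d3)/2) by (rewrite Hbc Hcd Hbd; field); unfold dot, sq; field).
assert (E14 : dot (b1-c1) (b2-c2) (b3-c3) (e1-c1) (e2-c2) (e3-c3) = S/2) by (replace (S/2) with ((sq b1 b2 b3 c1 c2 c3 + sq c1 c2 c3 e1 e2 e3 - sq b1 b2 b3 e1 e2 e3)/2) by (rewrite Hbc Hce Hbe; field); unfold dot, sq; field).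
assert (E15 : dot (b1-c1) (b2-c2) (b3-c3) (a1-c1) (a2-c2) (a3-c3) = (2*S - sq a1 a2 a3 b1 b2 b3)/2) by (replace (2*S) with (sq b1 b2 b3 c1 c2 c3 + sq a1 a2 a3 c1 c2 c3) by (rewrite Hbc Hac; ring); unfold dot, sq; field).
assert (E16 : dot (b1-c1) (b2-c2) (b3-c3) (b1-c1) (b2-c2) (b3-c3) = S) by (rewrite -Hbc; unfold dot, sq; ring).
rewrite E1 E2 E3 E4 E5 E6 E7 E8 E9 E10 E11 E12 E13 E14 E15 E16 in G.
set ab := sq a1 a2 a3 b1 b2 b3 in Hab Hab0 G.
assert (G2 : -(S*S)/4 * (((2*S-ab)/2 - S) * (3*((2*S-ab)/2) + S)) = 0) by (rewrite -G; unfold det4, det3; field).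
assert (P1 : ((2*S-ab)/2 - S) < 0) by lra.
assert (P2 : 0 < (3*((2*S-ab)/2) + S)) by lra.
assert (P3 : 0 < S*S) by nra.
assert (P4 : ((2*S-ab)/2 - S) * (3*((2*S-ab)/2) + S) < 0) by nra.
nra.
Qed.

Lemma diam_contra n (r : rel 'I_n) (W : {set 'I_n}) (a b c d e : 'I_n) :
  is_diameter_graph 3 r W ->
  a \in W -> b \in W -> c \in W -> d \in W -> e \in W -> a <> b ->
  c <> d -> c <> e -> d <> e -> a <> c -> a <> d -> a <> e -> b <> c -> b <> d -> b <> e ->
  r c d -> r c e -> r d e -> r a c -> r a d -> r a e -> r b c -> r b d -> r b e -> False.
Proof.
move=> [f [inj [D [hle [_ hiff]]]]] aW bW cW dW eW ab cd ce de ac ad ae bc bd be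
  rcd rce rde rac rad rae rbc rbd rbe.
have Ecd := (proj1 (hiff c d cW dW cd)) rcd.
have key : forall u v, u \in W -> v \in W -> u <> v -> r u v -> sq3 (f u) (f v) = sq3 (f c) (f d).
  move=> u v uW vW uv ruv; have := (proj1 (hiff u v uW vW uv)) ruv.
  rewrite eucl_sq -Ecd eucl_sq; apply: sqrt_inj; exact: sq3_ge0.
have Hab : sq3 (f a) (f b) <= sq3 (f c) (f d).
  apply: sqrt_le_0; try exact: sq3_ge0.
  by rewrite -!eucl_sq Ecd; apply: hle.
have fab : f a <> f b by move=> h; apply: ab; apply: inj.
have fcd : f c <> f d by move=> h; apply: cd; apply: inj.
apply: (@geo (f c i0) (f c i1) (f c i2) (f d i0) (f d i1) (f d i2) (f e i0) (f e i1) (f e i2)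
   (f a i0) (f a i1) (f a i2) (f b i0) (f b i1) (f b i2) (sq3 (f c) (f d))).
- exact: sq3_pos.
- by [].
- exact: (key c e).
- exact: (key d e).
- exact: (key a c).
- exact: (key a d).
- exact: (key a e).
- exact: (key b c).
- exact: (key b d).
- exact: (key b e).
- exact: Hab.
- exact: sq3_pos.
Qed.
Definition Mprop n (E : {set 'I_n * 'I_n}) := forall x y z : 'I_n,
  x != y -> x != z -> y != z -> adj E x y || adj E x z.

Lemma adjC n (E : {set 'I_n * 'I_n}) x y : adj E x y = adj E y x.
Proof. by rewrite /adj orbC. Qed.

Lemma adj_irr n (E : {set 'I_n * 'I_n}) x : E \subset upairs n -> ~~ adj E x x.
Proof. by move=> sEU; rewrite /adj orbb; apply/negP => /(subsetP sEU); rewrite inE ltnn. Qed.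

Section Comb.
Variables (n : nat) (E : {set 'I_n * 'I_n}) (W : {set 'I_n}).
Hypothesis hEU : E \subset upairs n.
Hypothesis hM : Mprop E.

Definition Qs := [set x in W | [forall y in W, (y < x)%N ==> adj E x y]].

Lemma Q_W x : x \in Qs -> x \in W.
Proof. by rewrite inE => /andP[]. Qed.

Lemma Q_clique x y : x \in Qs -> y \in Qs -> x != y -> adj E x y.
Proof.
have key : forall u v, u \in Qs -> v \in W -> (v < u)%N -> adj E u v.
  by move=> u v; rewrite inE => /andP[_ /forall_inP H] vW lt; exact: (implyP (H v vW) lt).
move=> xQ yQ nxy; case: (ltngtP x y) => h.
- by rewrite adjC; apply: key => //; exact: Q_W.
- by apply: key => //; exact: Q_W.
- by move: nxy; rewrite (val_inj h) eqxx.
Qed.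

Lemma partner_in_Q a b : a \in W -> b \in W -> (a < b)%N -> ~~ adj E b a -> a \in Qs.
Proof.
move=> aW bW ab nba; rewrite inE aW /=; apply/forall_inP => y yW; apply/implyP => ya.
have := hM (x:=a) (y:=y) (z:=b).
rewrite (adjC E a b) (negbTE nba) orbF; apply.
- by rewrite neq_ltn ya orbT.
- by rewrite neq_ltn ab.
- by rewrite neq_ltn (ltn_trans ya ab).
Qed.

Lemma other_adj b a c : a != b -> c != b -> a != c -> ~~ adj E b a -> adj E b c.
Proof.
move=> nab ncb nac nba; have := hM (x:=b) (y:=a) (z:=c).
rewrite (negbTE nba) /=; apply; by rewrite // eq_sym.
Qed.

Definition rep (x : 'I_n) := if [pick y in W | (y < x)%N && ~~ adj E x y] is Some y then y else x.
Definition col (x : 'I_n) := index (rep x) (enum Qs).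

Lemma rep_spec (x : 'I_n) : x \in W -> rep x \in Qs /\ (rep x = x \/ ((rep x < x)%N /\ ~~ adj E x (rep x))).
Proof.
move=> xW; rewrite /rep; case: pickP => [y /andP[yW /andP[lt na]] | none].
  split; last by right.
  by apply: (partner_in_Q yW xW lt na).
split; last by left.
rewrite inE xW /=; apply/forall_inP => y yW; apply/implyP => lt.
by have := none y; rewrite yW lt /= => /negbFE.
Qed.

Lemma Q_colorable : colorable (adj E) W #|Qs|.
Proof.
exists col; split.
  by move=> x xW; rewrite /col cardE index_mem mem_enum; case: (rep_spec xW).
move=> x y xW yW axy ceq.
have [rxQ hx] := rep_spec xW; have [ryQ hy] := rep_spec yW.
have req : rep x = rep y by apply: (@index_inj _ x (enum Qs)); rewrite ?mem_enum.
have nxy : x != y by apply: contraTneq axy => ->; exact: adj_irr.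
case: hx => [ex|[ltx nax]]; case: hy => [ey|[lty nay]].
- by move: nxy; rewrite -ex req ey eqxx.
- by move: nay; rewrite -req ex adjC axy.
- by move: nax; rewrite req ey axy.
- have nay' : ~~ adj E y (rep x) by rewrite req.
  have := hM (x:=rep x) (y:=x) (z:=y).
  rewrite !(adjC E (rep x)) (negbTE nax) (negbTE nay') /= => H.
  suff : false by [].
  apply: H => //.
  + by rewrite neq_ltn ltx.
  + by rewrite req neq_ltn lty.
Qed.


Lemma pick_one (T : finType) (A : {set T}) k : (k < #|A|)%N -> exists2 x, x \in A & (k <= #|A :\ x|)%N.
Proof.
move=> h; have /card_gt0P [x xA] : (0 < #|A|)%N by exact: leq_ltn_trans (leq0n k) h.
by exists x => //; move: h; rewrite (cardsD1 x A) xA add1n ltnS.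
Qed.

Definition configP (a b c d e : 'I_n) :=
  [/\ a \in W, b \in W, c \in W, d \in W & e \in W] /\ a != b /\
  [/\ adj E c d, adj E c e, adj E d e, adj E a c & adj E a d] /\
  [/\ adj E a e, adj E b c, adj E b d & adj E b e].

Lemma config : (5 <= #|W|)%N -> (4 <= #|Qs|)%N -> exists a b c d e, configP a b c d e.
Proof.
move=> hW hQ.
case: (boolP (W \subset Qs)) => sWQ.
  have hQ5 : (4 < #|Qs|)%N by apply: leq_trans hW (subset_leq_card sWQ).
  have [a aQ h4] := pick_one hQ5.
  have [b /setD1P [ba bQ] h3] := pick_one h4.
  have [c /setD1P [cb /setD1P [ca cQ]] h2] := pick_one h3.
  have [d /setD1P [dc /setD1P [db /setD1P [da dQ]]] h1] := pick_one h2.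
  have [e /setD1P [ed /setD1P [ec /setD1P [eb /setD1P [ea eQ]]]] _] := pick_one h1.
  exists a, b, c, d, e; split; first by split; apply: Q_W.
  split; first by rewrite eq_sym.
  split; split; apply: Q_clique => //; by rewrite eq_sym.
case/subsetPn: sWQ => b bW bQ.
have [raQ hr] := rep_spec bW.
case: hr => [eb | [lt nba]]; first by move: bQ; rewrite -eb raQ.
set a := rep b in raQ lt nba.
have h3 : (2 < #|Qs :\ a|)%N by move: hQ; rewrite (cardsD1 a) raQ add1n ltnS.
have [c /setD1P [ca cQ] h2] := pick_one h3.
have [d /setD1P [dc /setD1P [da dQ]] h1] := pick_one h2.
have [e /setD1P [ed /setD1P [ec /setD1P [ea eQ]]] _] := pick_one h1.
have ab : a != b by rewrite neq_ltn lt.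
have nQ x : x \in Qs -> x != b by move=> xQ; apply: contraNneq bQ => <-.
exists a, b, c, d, e; split; first by split => //; apply: Q_W.
split => //.
split; first by split; apply: Q_clique => //; rewrite eq_sym.
split; first by apply: Q_clique => //; rewrite eq_sym.
- by apply: (other_adj ab (nQ c cQ)) => //; rewrite eq_sym.
- by apply: (other_adj ab (nQ d dQ)) => //; rewrite eq_sym.
- by apply: (other_adj ab (nQ e eQ)) => //; rewrite eq_sym.
Qed.
End Comb.

Section K4.
Variables (n : nat) (h4 : (4 <= n)%N).

Definition W4 : {set 'I_n} := widen_ord h4 @: [set: 'I_4].

Lemma inW4 (x : 'I_n) : (x \in W4) = (x < 4)%N.
Proof.
apply/imsetP/idP => [[i _ ->] | xl] /=; first exact: ltn_ord.
by exists (Ordinal xl); [rewrite in_setT | apply: val_inj].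
Qed.

Lemma cardW4 : #|W4| = 4%N.
Proof. by rewrite card_imset ?cardsT ?card_ord // => i j /(congr1 val) /= /val_inj. Qed.

Definition S4 : {set 'I_n * 'I_n} := [set e : 'I_n * 'I_n | (e.1 < e.2)%N && (e.2 < 4)%N].

Lemma S4_sub : S4 \subset upairs n.
Proof. by apply/subsetP => e; rewrite !inE => /andP[]. Qed.

Lemma cardS4 : (#|S4| <= 16)%N.
Proof.
have -> : 16%N = #|setX W4 W4| by rewrite cardsX cardW4.
apply: subset_leq_card; apply/subsetP => -[x y]; rewrite !inE /= !inW4 => /andP[xy y4].
by rewrite y4 (ltn_trans xy y4).
Qed.

Definition tet (k : nat) (i : 'I_3) : R :=
  match k with
  | 0 => 1
  | 1 => if i == i0 then 1 else -1
  | 2 => if i == i1 then 1 else -1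
  | _ => if i == i2 then 1 else -1
  end.

Lemma tet_sq k l : (k < 4)%N -> (l < 4)%N -> k <> l -> sq3 (tet k) (tet l) = 8.
Proof.
case: k => [|[|[|[|k]]]] //; case: l => [|[|[|[|l]]]] // _ _ _; rewrite /sq3 /=; ring.
Qed.

Lemma sq3_refl x : sq3 x x = 0.
Proof. rewrite /sq3; ring. Qed.

Definition ok (k : nat) (hk : (k < 4)%N) : 'I_n := widen_ord h4 (Ordinal hk).

Lemma K4_event conn (E : {set 'I_n * 'I_n}) : E \subset upairs n -> S4 \subset E ->
  @ud_event conn 3%N n 4%N E.
Proof.
move=> sEU sSE.
have adjW : forall x y, x \in W4 -> y \in W4 -> x != y -> adj E x y.
  move=> x y; rewrite !inW4 => xl yl nxy; rewrite /adj; case: (ltngtP x y) => h.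
  - by apply/orP; left; apply: (subsetP sSE); rewrite inE /= h yl.
  - by apply/orP; right; apply: (subsetP sSE); rewrite inE /= h xl.
  - by move: nxy; rewrite (val_inj h) eqxx.
have hsq : forall x y : 'I_n, x \in W4 -> y \in W4 -> x != y -> sq3 (tet x) (tet y) = 8.
  move=> x y; rewrite !inW4 => xl yl nxy; apply: tet_sq => // h; move: nxy.
  by rewrite (val_inj h) eqxx.
have o0W : ok (isT : (0 < 4)%N) \in W4 by rewrite inW4.
have o1W : ok (isT : (1 < 4)%N) \in W4 by rewrite inW4.
have o2W : ok (isT : (2 < 4)%N) \in W4 by rewrite inW4.
have o3W : ok (isT : (3 < 4)%N) \in W4 by rewrite inW4.
exists W4; split; first exact: cardW4.
split.
  exists (fun x : 'I_n => tet x); split.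
    move=> x y xW yW fe; case: (eqVneq x y) => // nxy.
    have := hsq x y xW yW nxy; rewrite /= in fe; rewrite fe sq3_refl; lra.
  exists (sqrt 8); split.
    move=> x y xW yW; rewrite eucl_sq; case: (eqVneq x y) => [->|nxy].
      by rewrite sq3_refl sqrt_0; apply: sqrt_pos.
    by rewrite hsq //; apply: Rle_refl.
  split.
    exists (ok (isT : (0 < 4)%N)), (ok (isT : (1 < 4)%N)); do 2!split => //.
    by rewrite eucl_sq hsq.
  move=> x y xW yW nxy; have nxy' : x != y by apply/eqP.
  rewrite eucl_sq hsq //; split => // _; exact: adjW.
split.
  split.
    exists (fun x : 'I_n => nat_of_ord x); split; first by move=> x; rewrite inW4.
    move=> x y xW yW axy h; move: axy; rewrite (val_inj h) => axy.
    by rewrite (negbTE (adj_irr y sEU)) in axy.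
  move=> j [c [cb cp]].
  have d01 := cp _ _ o0W o1W (adjW _ _ o0W o1W isT).
  have d02 := cp _ _ o0W o2W (adjW _ _ o0W o2W isT).
  have d03 := cp _ _ o0W o3W (adjW _ _ o0W o3W isT).
  have d12 := cp _ _ o1W o2W (adjW _ _ o1W o2W isT).
  have d13 := cp _ _ o1W o3W (adjW _ _ o1W o3W isT).
  have d23 := cp _ _ o2W o3W (adjW _ _ o2W o3W isT).
  have := cb _ o0W; have := cb _ o1W; have := cb _ o2W; have := cb _ o3W.
  move: d01 d02 d03 d12 d13 d23; clear; lia.
move=> _ x y xW yW; case: (eqVneq x y) => [->|nxy]; first exact: connect0.
by apply: connect1; rewrite xW yW adjW.
Qed.
End K4.

Lemma bernR (p : R) k : Rle 0 p -> Rle (1 - INR k * (1-p)) (p ^ k).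
Proof.
move=> p0; elim: k => [|k IH]; first by simpl; lra.
rewrite S_INR; change (p ^ k.+1) with (p * p ^ k).
have h1 := Rmult_le_compat_l p _ _ p0 IH.
have h3 := pos_INR k.
have h4 := Rle_0_sqr (1 - p).
have h2 := Rmult_le_pos _ _ h3 h4.
unfold Rsqr in h2.
nra.
Qed.
Section P.
Local Open Scope ring_scope.
Lemma weightE (T : finType) (R : comNzRingType) (U J : {set T}) (p q : R) : J \subset U ->
  p ^+ #|J| * q ^+ (#|U| - #|J|) = \prod_i (if i \in J then p else if i \in U then q else 1).
Proof.
move=> sJU; rewrite (bigID (mem J)) /=.
rewrite (eq_bigr (fun _ => p)); last by move=> i ->.
rewrite prodr_const.
rewrite (eq_bigr (fun i => if i \in U then q else 1)); last by move=> i /negbTE ->.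
rewrite -big_mkcondr /=.
rewrite (eq_bigl (mem (U :\: J))); last by move=> i; rewrite !inE andbC.
by rewrite prodr_const cardsD (setIidPr sJU).
Qed.

Lemma sumL (T : finType) (R : comNzRingType) (U : {set T}) (p q : R) (a b : T -> R) :
  \sum_(J : {set T} | J \subset U) p ^+ #|J| * q ^+ (#|U| - #|J|) *
      \prod_i (if i \in J then a i else b i)
  = \prod_i (if i \in U then p * a i + q * b i else b i).
Proof.
pose F i := if i \in U then p * a i else 0.
pose G i := if i \in U then q * b i else b i.
transitivity (\prod_i (F i + G i)); last first.
  by apply: eq_bigr => i _; rewrite /F /G; case: (i \in U); rewrite ?add0r.
rewrite bigA_distr.
rewrite [RHS](bigID (fun J : {set T} => J \subset U)) /=.
rewrite [X in _ = _ + X]big1 ?addr0; last first.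
  move=> J /subsetPn [i iJ iU].
  by rewrite (bigD1 i) //= iJ /F (negbTE iU) mul0r.
apply: eq_bigr => J sJU.
rewrite weightE // -big_split /=.
apply: eq_bigr => i _; rewrite /F /G.
case: ifP => iJ.
  by rewrite (subsetP sJU _ iJ).
by case: (i \in U); rewrite ?mul1r.
Qed.

Lemma prob_npE n (p : R) A : @prob_np n p A =
  \sum_(E : {set 'I_n * 'I_n} | E \subset upairs n) p ^+ #|E| * (1 - p) ^+ (#|upairs n| - #|E|) *
     (if excluded_middle_informative (A E) then 1 else 0).
Proof. by rewrite /prob_np; apply: eq_bigr => E _; rewrite !RpowE. Qed.

Definition wt n (p : R) (E : {set 'I_n * 'I_n}) := p ^+ #|E| * (1 - p) ^+ (#|upairs n| - #|E|).

Lemma prod_if_pow (T : finType) (S : {set T}) (x : R) :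
  \prod_i (if i \in S then x else 1) = x ^+ #|S|.
Proof. by rewrite -big_mkcond /= prodr_const. Qed.

Lemma prob_sub n (p : R) (S : {set 'I_n * 'I_n}) : S \subset upairs n ->
  \sum_(E : {set 'I_n * 'I_n} | E \subset upairs n) wt p E * (if S \subset E then 1 else 0) = p ^+ #|S|.
Proof.
move=> sSU.
transitivity (\sum_(E : {set 'I_n * 'I_n} | E \subset upairs n) wt p E *
   \prod_i (if i \in E then 1 else if i \in S then 0 else 1)).
  apply: eq_bigr => E _; congr (_ * _).
  case: (boolP (S \subset E)) => h.
    rewrite big1 // => i _; case: ifP => // iE.
    by case: ifP => // iS; rewrite (subsetP h _ iS) in iE.
  case/subsetPn: h => i iS iE.
  by rewrite (bigD1 i) //= (negbTE iE) iS mul0r.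
rewrite /wt sumL -prod_if_pow; apply: eq_bigr => i _.
case: (boolP (i \in S)) => iS.
  by rewrite (subsetP sSU _ iS) mulr1 mulr0 addr0.
by case: ifP => _ //; rewrite mulr1 mulr1 addrC subrK.
Qed.

Lemma prob_disj n (p : R) (S : {set 'I_n * 'I_n}) : S \subset upairs n ->
  \sum_(E : {set 'I_n * 'I_n} | E \subset upairs n) wt p E * (if [disjoint S & E] then 1 else 0)
   = (1 - p) ^+ #|S|.
Proof.
move=> sSU.
transitivity (\sum_(E : {set 'I_n * 'I_n} | E \subset upairs n) wt p E *
   \prod_i (if i \in E then (if i \in S then 0 else 1) else 1)).
  apply: eq_bigr => E _; congr (_ * _).
  case: (boolP [disjoint S & E]) => h.
    rewrite big1 // => i _; case: ifP => // iE.
    case: ifP => // iS.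
    by rewrite (disjointFr h iS) in iE.
  move: h; rewrite disjoints_subset => /subsetPn [i iS]; rewrite inE negbK => iE.
  by rewrite (bigD1 i) //= iE iS mul0r.
rewrite /wt sumL -prod_if_pow; apply: eq_bigr => i _.
case: (boolP (i \in S)) => iS.
  by rewrite (subsetP sSU _ iS) mulr0 add0r mulr1.
by case: ifP => _ //; rewrite !mulr1 addrC subrK.
Qed.

Lemma wt_ge0 n (p : R) (E : {set 'I_n * 'I_n}) : 0 <= p <= 1 -> 0 <= wt p E.
Proof.
case/andP=> p0 p1; rewrite /wt mulr_ge0 // exprn_ge0 // subr_ge0 //.
Qed.

Lemma prob_lower n (p : R) (A : {set 'I_n * 'I_n} -> Prop) (S : {set 'I_n * 'I_n}) :
  0 <= p <= 1 -> S \subset upairs n ->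
  (forall E : {set 'I_n * 'I_n}, E \subset upairs n -> S \subset E -> A E) -> p ^+ #|S| <= prob_np p A.
Proof.
move=> hp sSU hA; rewrite prob_npE -(prob_sub p sSU).
apply: ler_sum => E sEU; rewrite -/(wt p E) ler_wpM2l ?wt_ge0 //.
case: ifP => h; last by case: excluded_middle_informative.
by case: excluded_middle_informative => // hn; case: (hn (hA E sEU h)).
Qed.

Lemma prob_upper n (p : R) (A : {set 'I_n * 'I_n} -> Prop) (I : finType) (P : pred I)
  (T : I -> {set 'I_n * 'I_n}) :
  0 <= p <= 1 -> (forall i, T i \subset upairs n) ->
  (forall E : {set 'I_n * 'I_n}, E \subset upairs n -> A E -> exists i, P i && [disjoint T i & E]) ->
  prob_np p A <= \sum_(i | P i) (1 - p) ^+ #|T i|.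
Proof.
move=> hp sTU hA; rewrite prob_npE.
under [X in _ <= X]eq_bigr => i _ do rewrite -(prob_disj p (sTU i)).
rewrite exchange_big /=.
apply: ler_sum => E sEU; rewrite -/(wt p E) -big_distrr /= ler_wpM2l ?wt_ge0 //.
case: excluded_middle_informative => hAE; last first.
  by apply: sumr_ge0 => i _; case: ifP.
have [i /andP [Pi di]] := hA E sEU hAE.
rewrite (bigD1 i) //= di lerDl; apply: sumr_ge0 => j _; by case: ifP.
Qed.

Lemma bernoulli (p : R) k : 0 <= p -> 1 - k%:R * (1 - p) <= p ^+ k.
Proof.
move=> /RleP p0; apply/RleP; rewrite -INRE -RpowE; exact: bernR.
Qed.
End P.

Section Final.
Local Open Scope ring_scope.

Lemma F1 n (p : R) conn : (4 <= n)%N -> 0 <= p <= 1 ->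
  1 - 16%:R * (1 - p) <= @prob_np n p (@ud_event conn 3%N n 4%N).
Proof.
move=> h4 hp; have /andP[p0 p1] := hp.
apply: le_trans _ (prob_lower hp (S4_sub n) (fun E sEU sSE => K4_event h4 conn sEU sSE)).
apply: le_trans _ (bernoulli _ p0).
rewrite lerD2l lerN2; apply: ler_wpM2r; first by rewrite subr_ge0.
by rewrite ler_nat cardS4.
Qed.

Definition pr n (x y : 'I_n) : 'I_n * 'I_n := if (x < y)%N then (x, y) else (y, x).

Lemma pr_U n (x y : 'I_n) : x != y -> pr x y \in upairs n.
Proof.
move=> nxy; rewrite /pr inE; case: (ltngtP x y) => //= h.
by move: nxy; rewrite (val_inj h) eqxx.
Qed.

Lemma pr_adj n (E : {set 'I_n * 'I_n}) x y : pr x y \in E -> adj E x y.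
Proof. by rewrite /pr /adj; case: ifP => _ ->; rewrite ?orbT. Qed.

Lemma pr_neq n (x y z : 'I_n) : x != y -> x != z -> y != z -> pr x y != pr x z.
Proof.
move=> nxy nxz nyz; rewrite /pr; do 2 case: ifP => _; rewrite xpair_eqE.
- by rewrite (negbTE nyz) andbF.
- by rewrite (negbTE nxz).
- by rewrite eq_sym (negbTE nxy).
- by rewrite (negbTE nyz).
Qed.

Definition distinct3 n (t : 'I_n * 'I_n * 'I_n) :=
  [&& t.1.1 != t.1.2, t.1.1 != t.2 & t.1.2 != t.2].

Definition Dset n (t : 'I_n * 'I_n * 'I_n) : {set 'I_n * 'I_n} :=
  if distinct3 t then [set pr t.1.1 t.1.2; pr t.1.1 t.2] else set0.

Lemma adj_neq n (E : {set 'I_n * 'I_n}) x y : E \subset upairs n -> adj E x y -> x <> y.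
Proof. by move=> sEU axy exy; move: axy; rewrite exy (negbTE (adj_irr y sEU)). Qed.

Lemma no_event n (E : {set 'I_n * 'I_n}) conn k : (5 <= k)%N -> E \subset upairs n ->
  @ud_event conn 3%N n k E -> Mprop E -> False.
Proof.
move=> hk sEU [W [cW [dg [chr _]]]] hM.
have h4 : (4 <= #|Qs E W|)%N := proj2 chr _ (@Q_colorable n E W sEU hM).
have hW : (5 <= #|W|)%N by rewrite cW.
have [a [b [c [d [e [[aW bW cW' dW eW] [ab [[rcd rce rde rac rad] [rae rbc rbd rbe]]]]]]]]] :=
  @config n E W hM hW h4.
have ab' : a <> b by move=> h; move: ab; rewrite h eqxx.
apply: (diam_contra dg aW bW cW' dW eW ab'
  (adj_neq sEU rcd) (adj_neq sEU rce) (adj_neq sEU rde) (adj_neq sEU rac) (adj_neq sEU rad)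
  (adj_neq sEU rae) (adj_neq sEU rbc) (adj_neq sEU rbd) (adj_neq sEU rbe)) => //.
Qed.

Lemma F2 n (p : R) conn k : (5 <= k)%N -> 0 <= p <= 1 ->
  @prob_np n p (@ud_event conn 3%N n k) <= (n%:R) ^+ 3 * (1 - p) ^+ 2.
Proof.
move=> hk hp.
have H : @prob_np n p (@ud_event conn 3%N n k) <=
    \sum_(t | distinct3 t) (1 - p) ^+ #|@Dset n t|.
  apply: (prob_upper (P := @distinct3 n) (T := @Dset n) hp).
- move=> t; rewrite /Dset; case: ifP => [/and3P[h1 h2 h3]|_]; last exact: sub0set.
  by apply/subsetP => e; rewrite !in_set2 => /orP[]/eqP ->; apply: pr_U.
- move=> E sEU hev.
  case: (classic (exists t, distinct3 t && [disjoint Dset t & E])) => // hne; exfalso.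
  apply: (no_event hk sEU hev) => x y z nxy nxz nyz.
  apply/negPn/negP => /norP [nax naz]; apply: hne; exists ((x, y), z).
  have dt : distinct3 ((x, y), z) by rewrite /distinct3 /= nxy nxz nyz.
  rewrite dt /Dset dt /= disjoints_subset; apply/subsetP => e.
  rewrite !inE => /orP[]/eqP ->; apply/negP => /pr_adj; by [rewrite (negbTE nax) | rewrite (negbTE naz)].
apply: le_trans H _.
rewrite (eq_bigr (fun _ => (1 - p) ^+ 2)); last first.
  by move=> t dt; rewrite /Dset dt cards2 pr_neq //; case/and3P: dt.
apply: (@le_trans _ _ (\sum_(t : 'I_n * 'I_n * 'I_n) (1 - p) ^+ 2)).
  rewrite [X in _ <= X](bigID (@distinct3 n)) /= lerDl.
  by apply: sumr_ge0 => t _; rewrite sqr_ge0.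
rewrite sumr_const !card_prod !card_ord -[(1 - p) ^+ 2 *+ _]mulr_natr !natrM.
have -> : (n%:R ^+ 3 : R) = n%:R * n%:R * n%:R by rewrite !exprS expr0 mulr1 mulrA.
rewrite mulrC; exact: lexx.
Qed.

End Final.

Lemma F1R n (p : R) conn : (4 <= n)%N -> Rle 0 p -> Rle p 1 ->
  Rle (1 - INR 16 * (1 - p)) (@prob_np n p (@ud_event conn 3%N n 4%N)).
Proof.
move=> h4 /RleP p0 /RleP p1; rewrite INRE; apply/RleP; apply: F1 => //.
by rewrite p0 p1.
Qed.

Lemma F2R n (p : R) conn k : (5 <= k)%N -> Rle 0 p -> Rle p 1 ->
  Rle (@prob_np n p (@ud_event conn 3%N n k)) (INR n ^ 3 * (1 - p) ^ 2).
Proof.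
move=> hk /RleP p0 /RleP p1; rewrite INRE !RpowE; apply/RleP; apply: F2 => //.
by rewrite p0 p1.
Qed.

Lemma u_gen4 conn n (p : R) : (4 <= n)%N -> good_k conn 3 n p 4 ->
  (forall k, (5 <= k)%N -> ~~ good_k conn 3 n p k) -> u_gen conn 3 n p = 4%N.
Proof.
move=> n4 g4 gk; rewrite /u_gen; apply/eqP; rewrite eqn_leq; apply/andP; split.
  apply/bigmax_leqP => i gi; rewrite leqNgt; apply/negP => h.
  by move: gi; rewrite (negbTE (gk i h)).
have h5 : (4 < n.+1)%N by rewrite ltnS.
exact: (@leq_bigmax_cond _ _ _ (Ordinal h5)).
Qed.

Theorem theorem20 (p : nat -> R)
  (hp : forall n, Rle 0 (p n) /\ Rle (p n) 1)
  (hq : Un_cv (fun n => Rmult (Rminus 1 (p n)) (Rpower (INR n) (Rdiv 3 2))) 0) :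
  exists N : nat, forall n : nat, (N <= n)%N ->
    u_d 3 n (p n) = 4%N /\ u'_d 3 n (p n) = 4%N.
Proof.
have [N0 HN] := hq (/ 32) ltac:(lra).
exists (maxn N0 4) => n hn.
have n4 : (4 <= n)%N by apply: leq_trans hn; rewrite leq_maxr.
have nN : Peano.le N0 n by apply/ssrnat.leP; apply: leq_trans hn; rewrite leq_maxl.
have := HN n nN; rewrite /R_dist Rminus_0_r => habs.
have [p0 p1] := hp n.
have hINR : 4 <= INR n.
  have := le_INR 4 n (elimT ssrnat.leP n4); rewrite (INR_IZR_INZ 4) /=; lra.
have P1 : 1 <= Rpower (INR n) (3 / 2).
  rewrite -(Rpower_O (INR n)); last lra.
  apply: Rle_Rpower; lra.
have PP : Rpower (INR n) (3 / 2) * Rpower (INR n) (3 / 2) = INR n ^ 3.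
  rewrite -Rpower_plus; replace (3 / 2 + 3 / 2) with (INR 3) by (simpl; lra).
  rewrite Rpower_pow //; lra.
have hqP : (1 - p n) * Rpower (INR n) (3 / 2) < / 32.
  by apply: Rle_lt_trans (Rle_abs _) habs.
have q0 : 0 <= 1 - p n by lra.
have hqP0 : 0 <= (1 - p n) * Rpower (INR n) (3 / 2) by apply: Rmult_le_pos; lra.
have hq1 : 1 - p n < / 32 by nra.
have hq2 : INR n ^ 3 * (1 - p n) ^ 2 < / 2.
  rewrite -PP; nra.
have g4 : forall conn, good_k conn 3 n (p n) 4.
  move=> conn; rewrite /good_k /=; case: Rlt_dec => // h; exfalso; apply: h.
  have := F1R conn n4 p0 p1; rewrite (INR_IZR_INZ 16) /=; lra.
have gk : forall conn k, (5 <= k)%N -> ~~ good_k conn 3 n (p n) k.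
  move=> conn k hk; rewrite /good_k; case: Rlt_dec => h; last by rewrite andbF.
  exfalso; have := F2R n conn hk p0 p1; lra.
split; [exact: (u_gen4 n4 (g4 false) (gk false)) | exact: (u_gen4 n4 (g4 true) (gk true))].
Qed.
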